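(* Let $G,G'$ be finitely generated groups with neutral elements $o,o'$, equipped with word metrics $d,d'$ coming from Cayley graphs with respect to finite generating sets, let $0<c<\infty$, and equip $G'':=G\times G'$ with the metric $\rho_c((x,x'),(y,y')):=d(x,y)+d'(x',y')/c$ and origin $o'':=(o,o')$. Then the horocompactification of $(G'',\rho_c)$ is identified with $\overline G\times\overline{G'}$: precisely, the set of points of $\overline{G''}$ (viewed as functions on $G''$) is exactly the set of functions $d_{(u,u')}(y,y'):=d_u(y)+d_{u'}(y')/c$ with $u\in\overline G$ and $u'\in\overline{G'}$.
   Context: For a countable set $H$ with origin $o_H$ and a metric $\rho$ all of whose balls are finite: for $x\in H$ let $\rho_x(y):=\rho(x,y)-\rho(x,o_H)$. Identifying $x$ with $\rho_x$, the horocompactification $\overline H$ is the closure of $\{\rho_x: x\in H\}$ in the space of $1$-Lipschitz functions on $H$ vanishing at $o_H$, with pointwise convergence; $\partial H:=\overline H\setminus H$. Elements $u\in\overline G$ are regarded as functions $d_u$ on $G$ (with $d_u=d(u,\cdot)-d(u,o)$ when $u\in G$), and similarly for $G'$ with origin $o'$ and metric $d'$. *)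

(* Defs.v *)
From Stdlib Require Import Reals List.
Open Scope R_scope.

Record is_group (T : Type) (mul : T -> T -> T) (inv : T -> T) (one : T) : Prop := {
  grp_assoc : forall x y z, mul x (mul y z) = mul (mul x y) z;
  grp_mul1g : forall x, mul one x = x;
  grp_mulg1 : forall x, mul x one = x;
  grp_mulVg : forall x, mul (inv x) x = one;
  grp_mulgV : forall x, mul x (inv x) = one }.

(* d is the word metric of the Cayley graph of (T,mul,inv) w.r.t. the finite
   set S (a list): d x y is the least length of a word w = s_1 ... s_n with
   letters in S ∪ S^{-1} such that y = x s_1 ... s_n.  (Totality of d forces S
   to generate the group.) *)
Definition word_metric (T : Type) (mul : T -> T -> T) (inv : T -> T)
    (S : list T) (d : T -> T -> nat) : Prop :=
  forall (x y : T) (n : nat),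
    (d x y <= n)%nat <->
    exists w : list T,
      (length w <= n)%nat /\
      Forall (fun s => In s S \/ In (inv s) S) w /\
      y = fold_left mul w x.

(* Horocompactification of (H, rho) with origin o, as a set of functions
   H -> R: the closure, in the space of 1-Lipschitz functions vanishing at o
   with the topology of pointwise convergence, of { rho_x : x in H } where
   rho_x y = rho x y - rho x o.  Closure in the product topology is written
   out through basic neighbourhoods (finitely many coordinates, radius eps). *)
Definition horo (H : Type) (rho : H -> H -> R) (o : H) (f : H -> R) : Prop :=
  (forall y z, Rabs (f y - f z) <= rho y z) /\
  f o = 0 /\
  (forall (F : list H) (eps : R), 0 < eps ->
     exists x : H, forall y, In y F -> Rabs ((rho x y - rho x o) - f y) < eps).

Definition rho_prod (G G' : Type) (d : G -> G -> nat) (d' : G' -> G' -> nat)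
    (c : R) (p q : G * G') : R :=
  INR (d (fst p) (fst q)) + INR (d' (snd p) (snd q)) / c.

(* Main.v *)
Require Import Defs.
From Stdlib Require Import Reals List Lra Lia.
Open Scope R_scope.

Lemma wm_refl (T : Type) (mul : T -> T -> T) (inv : T -> T) (S : list T)
  (d : T -> T -> nat) : word_metric T mul inv S d -> forall x, d x x = 0%nat.
Proof.
  intros H x. assert (Hle : (d x x <= 0)%nat).
  { apply H. exists nil. simpl. repeat split; auto. }
  lia.
Qed.

Lemma zero_of_small (D : R) : (forall eps, 0 < eps -> Rabs D < 3 * eps) -> D = 0.
Proof.
  intros H. destruct (Req_dec D 0) as [|Hn]; auto.
  pose proof (Rabs_pos_lt D Hn).
  specialize (H (Rabs D / 4)). lra.
Qed.

Lemma abs_bnd a e : Rabs a < e -> - e < a < e.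
Proof. intros H. apply Rabs_def2 in H. lra. Qed.

Theorem lemma2p2
  (G : Type) (mul : G -> G -> G) (inv : G -> G) (o : G)
  (HG : is_group G mul inv o) (S : list G) (d : G -> G -> nat)
  (Hd : word_metric G mul inv S d)
  (G' : Type) (mul' : G' -> G' -> G') (inv' : G' -> G') (o' : G')
  (HG' : is_group G' mul' inv' o') (S' : list G') (d' : G' -> G' -> nat)
  (Hd' : word_metric G' mul' inv' S' d')
  (c : R) (Hc : 0 < c) :
  forall f : G * G' -> R,
    horo (G * G') (rho_prod G G' d d' c) (o, o') f <->
    exists (u : G -> R) (u' : G' -> R),
      horo G (fun x y => INR (d x y)) o u /\
      horo G' (fun x y => INR (d' x y)) o' u' /\
      (forall y y', f (y, y') = u y + u' y' / c).
Proof.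
  pose proof (wm_refl _ _ _ _ _ Hd) as R0.
  pose proof (wm_refl _ _ _ _ _ Hd') as R0'.
  intros f; split.
  - intros [Hlip [H0 Happ]].
    assert (Hadd : forall y y', f (y, y') = f (y, o') + f (o, y')).
    { intros y y'.
      enough (f (y, y') - f (y, o') - f (o, y') = 0) by lra.
      apply zero_of_small. intros eps Heps.
      destruct (Happ ((y,y') :: (y,o') :: (o,y') :: nil) eps Heps) as [[x1 x2] Hx].
      pose proof (abs_bnd _ _ (Hx (y,y') ltac:(simpl; auto))) as A1.
      pose proof (abs_bnd _ _ (Hx (y,o') ltac:(simpl; auto))) as A2.
      pose proof (abs_bnd _ _ (Hx (o,y') ltac:(simpl; auto))) as A3.
      unfold rho_prod in A1, A2, A3; simpl in A1, A2, A3.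
      apply Rabs_def1; lra. }
    exists (fun y => f (y, o')), (fun y' => c * f (o, y')).
    split; [|split].
    + split; [|split].
      * intros y z. pose proof (Hlip (y,o') (z,o')) as L.
        unfold rho_prod in L; simpl in L. rewrite R0' in L. simpl in L. lra.
      * exact H0.
      * intros F eps Heps.
        destruct (Happ (map (fun y => (y, o')) F) eps Heps) as [[x1 x2] Hx].
        exists x1. intros y Hy.
        pose proof (Hx (y, o') (in_map (fun y => (y, o')) F y Hy)) as A.
        unfold rho_prod in A; simpl in A.
        replace (INR (d x1 y) - INR (d x1 o)) with
          (INR (d x1 y) + INR (d' x2 o') / c - (INR (d x1 o) + INR (d' x2 o') / c)) by ring.
        exact A.
    + split; [|split].
      * intros y z. pose proof (Hlip (o,y) (o,z)) as L.
        unfold rho_prod in L; simpl in L. rewrite R0 in L. simpl in L.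
        rewrite <- Rmult_minus_distr_l, Rabs_mult, (Rabs_pos_eq c) by lra.
        apply Rmult_le_compat_l with (r := c) in L; [|lra].
        replace (c * (0 + INR (d' y z) / c)) with (INR (d' y z)) in L by (field; lra).
        exact L.
      * rewrite H0. ring.
      * intros F eps Heps.
        destruct (Happ (map (fun y => (o, y)) F) (eps / c) ltac:(apply Rdiv_lt_0_compat; lra))
          as [[x1 x2] Hx].
        exists x2. intros y Hy.
        pose proof (Hx (o, y) (in_map (fun y => (o, y)) F y Hy)) as A.
        unfold rho_prod in A; simpl in A.
        replace (INR (d' x2 y) - INR (d' x2 o') - c * f (o, y)) with
          (c * (INR (d x1 o) + INR (d' x2 y) / c - (INR (d x1 o) + INR (d' x2 o') / c) - f (o, y)))
          by (field; lra).
        rewrite Rabs_mult, (Rabs_pos_eq c) by lra.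
        apply Rmult_lt_compat_l with (r := c) in A; [|lra].
        replace (c * (eps / c)) with eps in A by (field; lra).
        exact A.
    + intros y y'. rewrite Hadd. field. lra.
  - intros [u [u' [[L1 [Z1 A1]] [[L2 [Z2 A2]] Hf]]]].
    split; [|split].
    + intros [y y'] [z z']. rewrite !Hf. unfold rho_prod; simpl.
      pose proof (L1 y z) as B1. pose proof (L2 y' z') as B2.
      replace (u y + u' y' / c - (u z + u' z' / c)) with
        ((u y - u z) + (u' y' - u' z') / c) by (field; lra).
      eapply Rle_trans; [apply Rabs_triang|].
      apply Rplus_le_compat; auto.
      unfold Rdiv. rewrite Rabs_mult, (Rabs_pos_eq (/ c)).
      2: { left; apply Rinv_0_lt_compat; lra. }
      apply Rmult_le_compat_r; auto. left; apply Rinv_0_lt_compat; lra.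
    + rewrite Hf, Z1, Z2. field. lra.
    + intros F eps Heps.
      destruct (A1 (map fst F) (eps / 2) ltac:(lra)) as [x1 Hx1].
      destruct (A2 (map snd F) (c * eps / 2) ltac:(nra)) as [x2 Hx2].
      exists (x1, x2). intros [y y'] Hy. rewrite Hf. unfold rho_prod; simpl.
      pose proof (abs_bnd _ _ (Hx1 y (in_map fst F (y,y') Hy))) as B1.
      pose proof (abs_bnd _ _ (Hx2 y' (in_map snd F (y,y') Hy))) as B2.
      set (a := INR (d' x2 y') - INR (d' x2 o') - u' y') in *.
      replace (INR (d x1 y) + INR (d' x2 y') / c - (INR (d x1 o) + INR (d' x2 o') / c) -
               (u y + u' y' / c)) with
        ((INR (d x1 y) - INR (d x1 o) - u y) + a / c) by (unfold a; field; lra).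
      assert (- (eps/2) < a / c < eps / 2).
      { split.
        - apply Rmult_lt_reg_l with c; [lra|].
          replace (c * (a / c)) with a by (field; lra). lra.
        - apply Rmult_lt_reg_l with c; [lra|].
          replace (c * (a / c)) with a by (field; lra). lra. }
      apply Rabs_def1; lra.
Qed.
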